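(* In any quiver, if $A$ is an ancestor of finite height of a normal vertex $B$, then both $A$ and $B$ are phylogenetic.
   Context: A quiver consists of a class of vertices and, for each ordered pair of vertices $(A,B)$, a set of edges $A\to B$ (loops and multiple edges allowed). An evolution of length $m\ge 0$ is a sequence $A_0\leftarrow A_1\leftarrow\cdots\leftarrow A_m$ of vertices together with edges $A_k\to A_{k-1}$ ($1\le k\le m$); $A_0$ is its initial and $A_m$ its terminal vertex. Write $A\le B$ ($A$ is an ancestor of $B$) if there is an evolution with initial vertex $A$ and terminal vertex $B$; $A,B$ are isotypic ($A\sim B$) if $A\le B$ and $B\le A$. A vertex $A$ is primitive if every ancestor of $A$ is isotypic to $A$. A full evolution for $X$ is an evolution with primitive initial vertex and terminal vertex $X$. The height $h(X)$ is the smallest length of a full evolution for $X$ ($\infty$ if none). A vertex $A_k$ ($0\le k<m$) of an evolution $A_0\leftarrow\cdots\leftarrow A_m$ is critical if $h(A_k)<\infty$ and $h(A_{k+1})=h(A_k)+1$. The critical ancestors of a vertex $B$ are the critical vertices of full evolutions terminating at $B$. $B$ is normal if any two critical ancestors of $B$ of equal height are isotypic. An evolution $\alpha=(A_0\leftarrow\cdots\leftarrow A_m)$ embeds in $\beta=(B_0\leftarrow\cdots\leftarrow B_n)$ if $m\le n$ and there are $0\le r_0<\cdots<r_m\le n$ with $A_k\sim B_{r_k}$. A universal evolution for $X$ is a full evolution for $X$ embedding in every full evolution for $X$; $X$ is phylogenetic if one exists. *)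

(* Defs.v *)
From Stdlib Require Import Arith.

Section Quiver.
Variable V : Type.
Variable E : V -> V -> Type.

(* An evolution of length m: vertices f 0, ..., f m (values of f beyond m are
   irrelevant) together with edges f (k+1) -> f k for k < m. *)
Definition is_evol (m : nat) (f : nat -> V) : Prop :=
  forall k, k < m -> inhabited (E (f (S k)) (f k)).

Definition ancestor (A B : V) : Prop :=
  exists m f, is_evol m f /\ f 0 = A /\ f m = B.

Definition isotypic (A B : V) : Prop := ancestor A B /\ ancestor B A.

Definition primitive (A : V) : Prop := forall C, ancestor C A -> isotypic C A.

Definition full_evol (X : V) (m : nat) (f : nat -> V) : Prop :=
  is_evol m f /\ primitive (f 0) /\ f m = X.

Definition height_is (X : V) (n : nat) : Prop :=
  (exists f, full_evol X n f) /\ forall m f, full_evol X m f -> n <= m.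

Definition finite_height (X : V) : Prop := exists n, height_is X n.

Definition critical (m : nat) (f : nat -> V) (k : nat) : Prop :=
  k < m /\ exists n, height_is (f k) n /\ height_is (f (S k)) (S n).

Definition critical_ancestor (B C : V) : Prop :=
  exists m f k, full_evol B m f /\ critical m f k /\ f k = C.

Definition normal (B : V) : Prop :=
  forall C D n, critical_ancestor B C -> critical_ancestor B D ->
    height_is C n -> height_is D n -> isotypic C D.

Definition embeds (m : nat) (f : nat -> V) (n : nat) (g : nat -> V) : Prop :=
  m <= n /\ exists r : nat -> nat,
    (forall k, k < m -> r k < r (S k)) /\ r m <= n /\
    (forall k, k <= m -> isotypic (f k) (g (r k))).

Definition universal (X : V) (m : nat) (f : nat -> V) : Prop :=
  full_evol X m f /\ forall n g, full_evol X n g -> embeds m f n g.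

Definition phylogenetic (X : V) : Prop := exists m f, universal X m f.

End Quiver.

(* Main.v *)
Require Import Defs.
From Stdlib Require Import Arith Lia Classical IndefiniteDescription.

Section S.
Variable V : Type.
Variable E : V -> V -> Type.

Definition cat (m : nat) (f g : nat -> V) (k : nat) : V :=
  if k <=? m then f k else g (k - m).

Lemma cat_l m f g k : k <= m -> cat m f g k = f k.
Proof. intro H. unfold cat. destruct (Nat.leb_spec k m); [reflexivity|lia]. Qed.

Lemma cat_r m f g k : f m = g 0 -> m <= k -> cat m f g k = g (k - m).
Proof. intros H1 H2. unfold cat. destruct (Nat.leb_spec k m).
  - replace k with m by lia. rewrite Nat.sub_diag. auto.
  - reflexivity. Qed.

Lemma evol_cat m n f g : is_evol V E m f -> is_evol V E n g -> f m = g 0 ->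
  is_evol V E (m + n) (cat m f g).
Proof.
  intros Hf Hg Heq k Hk.
  destruct (Nat.lt_ge_cases k m) as [H|H].
  - rewrite !cat_l by lia. apply Hf; auto.
  - rewrite !cat_r by (auto; lia).
    replace (S k - m) with (S (k - m)) by lia. apply Hg. lia.
Qed.

Lemma evol_prefix m f j : is_evol V E m f -> j <= m -> is_evol V E j f.
Proof. intros H Hj k Hk. apply H. lia. Qed.

Lemma evol_shift m f j : is_evol V E m f -> j <= m -> is_evol V E (m - j) (fun i => f (i + j)).
Proof. intros H Hj k Hk. simpl. apply H. lia. Qed.

Lemma ancestor_refl A : ancestor V E A A.
Proof. exists 0, (fun _ => A). split; [intros k0 Hk; lia | split; reflexivity]. Qed.

Lemma isotypic_refl A : isotypic V E A A.
Proof. split; apply ancestor_refl. Qed.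

Lemma min_exists (P : nat -> Prop) : (exists m, P m) -> exists n, P n /\ forall m, P m -> n <= m.
Proof.
  intros [m Hm]. revert Hm. induction m as [m IH] using lt_wf_ind. intro Hm.
  destruct (classic (exists k, k < m /\ P k)) as [[k [Hk Pk]]|Hn].
  - exact (IH k Hk Pk).
  - exists m. split; auto. intros k Pk. destruct (Nat.lt_ge_cases k m); auto.
    exfalso. apply Hn. eauto.
Qed.

Lemma full_to_height X m f : full_evol V E X m f -> exists n, height_is V E X n /\ n <= m.
Proof.
  intro H. destruct (min_exists (fun m => exists f, full_evol V E X m f)) as [n [[g Hg] Hmin]]; eauto.
  exists n. split; [split; [eauto| intros m' f' H'; apply Hmin; eauto] | apply Hmin; eauto].
Qed.

Lemma height_unique X n n' : height_is V E X n -> height_is V E X n' -> n = n'.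
Proof. intros [[f Hf] H1] [[g Hg] H2]. specialize (H1 _ _ Hg). specialize (H2 _ _ Hf). lia. Qed.

Lemma primitive_height0 X : primitive V E X -> height_is V E X 0.
Proof. intro H. split. exists (fun _ => X). split; [intros k Hk; lia| split; auto]. intros; lia. Qed.

Lemma full_ext X m f p g : full_evol V E X m f -> is_evol V E p g -> g 0 = X ->
  full_evol V E (g p) (m + p) (cat m f g).
Proof.
  intros [Hf [Hp Hm]] Hg H0. split; [|split].
  - apply evol_cat; auto. congruence.
  - rewrite cat_l by lia. auto.
  - rewrite cat_r by (try congruence; lia). f_equal; lia.
Qed.

Lemma height_ancestor A B a : height_is V E A a -> ancestor V E A B ->
  exists b, height_is V E B b.
Proof.
  intros [[f Hf] _] [p [g [Hg [H0 Hp]]]]. subst B.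
  destruct (full_to_height _ _ _ (full_ext _ _ _ _ _ Hf Hg H0)) as [b [Hb _]]. eauto.
Qed.

Lemma height_step X Y a b : height_is V E X a -> inhabited (E Y X) -> height_is V E Y b -> b <= S a.
Proof.
  intros [[f Hf] _] He [_ Hb].
  pose (g := fun i => match i with 0 => X | _ => Y end).
  assert (Hg : is_evol V E 1 g). { intros k Hk. destruct k; [exact He | lia]. }
  pose proof (full_ext _ _ _ _ _ Hf Hg eq_refl) as H.
  specialize (Hb _ _ H). lia.
Qed.

Lemma shortest_heights X n f : height_is V E X n -> full_evol V E X n f ->
  forall k, k <= n -> height_is V E (f k) k.
Proof.
  intros [_ Hmin] [Hf [Hp Hn]] k Hk. split.
  - exists f. split; [|split]; auto. eapply evol_prefix; eauto.
  - intros m g Hg.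
    pose proof (full_ext _ _ _ _ _ Hg (evol_shift _ _ _ Hf Hk) eq_refl) as H.
    assert (E1 : f (n - k + k) = X) by (rewrite Nat.sub_add; auto).
    cbv beta in H. rewrite E1 in H. specialize (Hmin _ _ H). lia.
Qed.

Lemma normal_phylo X : normal V E X -> (exists n, height_is V E X n) -> phylogenetic V E X.
Proof.
  intros Hnorm [n Hn].
  destruct (proj1 Hn) as [f Hf].
  pose proof (shortest_heights _ _ _ Hn Hf) as Hfh.
  exists n, f. split; auto.
  intros N g Hg.
  pose proof Hg as [Hge [Hgp HgN]].
  assert (h0 : height_is V E (g 0) 0) by (apply primitive_height0; auto).
  assert (hN : height_is V E (g N) n) by (rewrite HgN; auto).
  assert (hg : forall j, j <= N -> exists a, height_is V E (g j) a).
  { intros j Hj. eapply height_ancestor; [exact h0|].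
    exists j, g. split; [eapply evol_prefix; eauto | auto]. }
  assert (hstep : forall j a b, j < N -> height_is V E (g j) a -> height_is V E (g (S j)) b -> b <= S a).
  { intros j a b Hj Ha Hb. eapply height_step; eauto. }
  assert (Hex : forall t, exists j, (t < n -> j < N /\ height_is V E (g j) t /\ height_is V E (g (S j)) (S t) /\
       forall j' a, j < j' -> j' <= N -> height_is V E (g j') a -> t < a) /\ (n <= t -> j = N)).
  { intro t. destruct (Nat.lt_ge_cases t n) as [Ht|Ht].
    2: { exists N. split; [intros; exfalso; lia|auto]. }
    destruct (min_exists (fun k => k <= N /\ exists a, height_is V E (g (N - k)) a /\ a <= t)) as [k [[Hk [a [Ha Hat]]] Hkmin]].
    { exists N. split; auto. exists 0. rewrite Nat.sub_diag. split; [exact h0|lia]. }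
    assert (Hk0 : k <> 0). { intro; subst k. rewrite Nat.sub_0_r in Ha. pose proof (height_unique _ _ _ Ha hN). lia. }
    exists (N - k). split; [intros _ | intros; exfalso; lia].
    assert (Hmax : forall j' a', N - k < j' -> j' <= N -> height_is V E (g j') a' -> t < a').
    { intros j' a' Hj1 Hj2 Ha'. destruct (Nat.lt_ge_cases t a') as [|Hle]; auto.
      assert (N - j' >= k) by (apply Hkmin; split; [lia| exists a'; replace (N - (N - j')) with j' by lia; auto]). lia. }
    destruct (hg (S (N - k))) as [b Hb]; [lia|].
    pose proof (hstep (N-k) a b ltac:(lia) Ha Hb).
    pose proof (Hmax (S (N-k)) b ltac:(lia) ltac:(lia) Hb).
    assert (b = S t) by lia. assert (a = t) by lia. subst.
    split; [lia| split; auto]. }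
  destruct (functional_choice _ Hex) as [r Hr].
  split.
  - apply (proj2 Hn _ _ Hg).
  - exists r. split; [|split].
    + intros t Ht.
      destruct (Hr t) as [Ht1 _]. destruct (Ht1 Ht) as [Hrt [Ha [Hb Hmax]]].
      destruct (Nat.lt_ge_cases (S t) n) as [Hs|Hs].
      * destruct (Hr (S t)) as [Hs1 _]. destruct (Hs1 Hs) as [Hrs [Ha' [_ Hmax']]].
        destruct (Nat.lt_ge_cases (r t) (r (S t))) as [|Hle]; auto. exfalso.
        destruct (Nat.eq_dec (r t) (r (S t))) as [Heq|Hne].
        -- rewrite Heq in Ha. pose proof (height_unique _ _ _ Ha Ha'). lia.
        -- pose proof (Hmax' (r t) t ltac:(lia) ltac:(lia) Ha). lia.
      * destruct (Hr (S t)) as [_ Hs2]. rewrite (Hs2 Hs). auto.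
    + destruct (Hr n) as [_ H2]. rewrite (H2 (le_n n)). lia.
    + intros k Hk. destruct (Nat.lt_ge_cases k n) as [Hkn|Hkn].
      * destruct (Hr k) as [H1 _]. destruct (H1 Hkn) as [Hrk [Ha [Hb _]]].
        apply (Hnorm (f k) (g (r k)) k).
        -- exists n, f, k. split; [auto|split; [split; [auto| exists k; split; apply Hfh; lia] | reflexivity]].
        -- exists N, g, (r k). split; [auto|split; [split; [auto| exists k; split; auto] | reflexivity]].
        -- apply Hfh; lia.
        -- auto.
      * assert (k = n) by lia. subst k. destruct (Hr n) as [_ H2]. rewrite (H2 (le_n n)).
        rewrite HgN, (proj2 (proj2 Hf)). apply isotypic_refl.
Qed.

Lemma crit_transfer A B C : ancestor V E A B -> critical_ancestor V E A C -> critical_ancestor V E B C.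
Proof.
  intros [p [g [Hg [H0 Hp]]]] [m [f [i [Hf [[Hi Hc] Hfi]]]]].
  pose proof (full_ext _ _ _ _ _ Hf Hg H0) as Hfe. rewrite Hp in Hfe.
  exists (m + p), (cat m f g), i. split; [exact Hfe|]. split.
  - split; [lia|]. rewrite !cat_l by lia. exact Hc.
  - rewrite cat_l by lia. exact Hfi.
Qed.

Lemma normal_ancestor A B : normal V E B -> ancestor V E A B -> normal V E A.
Proof.
  intros Hn Hab C D k HC HD H1 H2.
  apply (Hn C D k); auto; eapply crit_transfer; eauto.
Qed.

End S.

Theorem corollary5p2 (V : Type) (E : V -> V -> Type) (A B : V) :
  normal V E B -> ancestor V E A B -> finite_height V E A ->
  phylogenetic V E A /\ phylogenetic V E B.
Proof.
  intros Hn Hab [a Ha].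
  split.
  - apply normal_phylo; [apply (normal_ancestor _ _ _ B); auto | eauto].
  - apply normal_phylo; auto. eapply height_ancestor; eauto.
Qed.
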